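(* Let $r\in(0,1]$ and $a\ge0$. Then for $x>0$, \[ \lim_{t\to\infty} t\,\rho(tx;r,t,a)=\rho(x;r), \] i.e. $\lim_{t\to\infty}\rho(y;r,t,a)\,dy\big|_{y=tx}=\rho(x;r)\,dx$, where \[ \rho(x;r)=\frac{\sqrt{(x-(1-\sqrt r)^2)((1+\sqrt r)^2-x)}}{2\pi r x}\,\mathbf 1_{((1-\sqrt r)^2,(1+\sqrt r)^2)}(x) \] is the Marcenko--Pastur density.
   Context: The three-parametric MP density $\rho(x;r,t,a)$ ($r\in(0,1]$, $t>0$, $a\ge0$) is the density of the weak limit, as $N,M\to\infty$ with $N/M\to r$, of $\frac1N\sum_{j}\delta_{X^N_j(t)/M}$, where $X^N_j$ solve $dX^N_j=2\sqrt{X^N_j}dB_j+2(M-N+1)dt+4X^N_j\sum_{k\neq j}\frac{dt}{X^N_j-X^N_k}$ with independent standard Brownian motions $B_j$ and $X^N_j(0)=aM$; equivalently its Stieltjes transform $G$ solves $z=\frac1G+\frac{t}{1-rtG}+\frac{a}{(1-rtG)^2}$, and $\rho(x)=-\frac1\pi\lim_{\varepsilon\to0}\Im G(x+i\varepsilon)$. *)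

(* Defs.v *)
From HB Require Import structures.
From mathcomp Require Import all_boot all_order all_algebra.
From mathcomp Require Import all_classical all_reals all_analysis.
From mathcomp Require Import complex.
Set Implicit Arguments. Unset Strict Implicit. Unset Printing Implicit Defensive.
Import Order.TTheory GRing.Theory Num.Theory.
Import numFieldNormedType.Exports.
Local Open Scope classical_set_scope.
Local Open Scope ring_scope.
Local Open Scope complex_scope.

Definition stieltjes (R : realType) (mu : probability R R) (z : R[i]) : R[i] :=
  (\int[mu]_(y in setT) complex.Re ((z - y%:C)^-1))%R
  +i* (\int[mu]_(y in setT) complex.Im ((z - y%:C)^-1))%R.

Definition MP3_stieltjes (R : realType) (r t a : R) (G : R[i] -> R[i]) : Prop :=
  exists mu : probability R R,
    forall z : R[i], 0 < complex.Im z ->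
      G z = stieltjes mu z /\
      z = (G z)^-1 + t%:C / (1 - (r * t)%:C * G z)
          + a%:C / (1 - (r * t)%:C * G z) ^+ 2.

Definition mp_density (R : realType) (r x : R) : R :=
  if ((1 - Num.sqrt r) ^+ 2 < x) && (x < (1 + Num.sqrt r) ^+ 2) then
    Num.sqrt ((x - (1 - Num.sqrt r) ^+ 2) * ((1 + Num.sqrt r) ^+ 2 - x))
      / (2 * pi * r * x)
  else 0.

(* Main.v *)
Require Import Defs.
From HB Require Import structures.
From mathcomp Require Import all_boot all_order all_algebra.
From mathcomp Require Import all_classical all_reals all_analysis.
From mathcomp Require Import complex.
From mathcomp Require Import ring lra.
Import Order.TTheory GRing.Theory Num.Theory.
Import numFieldNormedType.Exports.
Local Open Scope classical_set_scope.
Local Open Scope ring_scope.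
Section S.
Context (R : realType).

Lemma bnd_int (mu : probability R R) (f : R -> R) (B : R) : continuous f -> (forall y, `|f y| <= B) ->
  mu.-integrable setT (EFin \o f).
Proof.
move=> cf hB; apply: measurable_bounded_integrable => //.
- apply: (@le_lt_trans _ _ 1%E); last exact: ltry. exact: probability_le1.
- exact: measurable_realfun.continuous_measurable_fun.
- exists B; split; first exact: num_real. move=> M hM y _ /=; apply: le_trans (hB y) (ltW hM).
Qed.
Lemma cont_sq (f : R -> R) : continuous f -> continuous (fun y => f y ^+ 2).
Proof.
move=> cf; have -> : (fun y => f y ^+ 2) = f \* f by apply: funext => y; rewrite expr2.
move=> y; exact: (continuousM (cf y) (cf y)).
Qed.

Lemma int_sq (mu : probability R R) (f : R -> R) B : continuous f -> (forall y, `|f y| <= B) ->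
  mu.-integrable setT (EFin \o (fun y => f y ^+ 2)).
Proof.
move=> cf hB; apply: (@bnd_int mu _ (B ^+ 2)); first exact: cont_sq.
move=> y; rewrite normrX; have := hB y; have := normr_ge0 (f y); nra.
Qed.

Lemma int_fin1 (mu : probability R R) : fine (mu setT) = 1.
Proof. by rewrite probability_setT. Qed.

Lemma jensen (mu : probability R R) (f : R -> R) B : continuous f -> (forall y, `|f y| <= B) ->
  (\int[mu]_y f y) ^+ 2 <= \int[mu]_y (f y) ^+ 2.
Proof.
move=> cf hB; set m := \int[mu]_y f y.
have h0 : 0 <= \int[mu]_y (f y - m) ^+ 2 by apply: Rintegral_ge0 => y _; exact: sqr_ge0.
have e : \int[mu]_y (f y - m) ^+ 2 = \int[mu]_y (f y) ^+ 2 - m ^+ 2.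
  have -> : (fun y => (f y - m) ^+ 2) = (fun y => f y ^+ 2 + ((- (2 * m)) * f y + m ^+ 2)).
    by apply: funext => y; ring.
  rewrite RintegralD //; last first.
    apply: (@bnd_int mu _ (`|2 * m| * B + m ^+ 2)).
      move=> y; exact: (@continuousD _ _ _ (fun y => -(2 * m) * f y) (fun=> m ^+ 2) y
         (@continuousM _ _ (fun=> -(2 * m)) f y (cvg_cst _) (cf y)) (cvg_cst _)).
    move=> y; apply: le_trans (ler_normD _ _) _.
    rewrite normrM normrN [`|m ^+ 2|]ger0_norm ?sqr_ge0 // lerD2r.
    by rewrite ler_wpM2l.
    exact: (int_sq mu) cf hB.
  rewrite RintegralD //; last exact: (bnd_int mu) (fun y => cvg_cst _) (fun y => lexx _).
    rewrite RintegralZl //; last exact: (bnd_int mu) cf hB.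
    rewrite Rintegral_cst // (int_fin1 mu) -/m; ring.
  apply: (@bnd_int mu _ (`|2 * m| * B)).
    by move=> y; exact: (@continuousM _ _ (fun=> -(2 * m)) f y (cvg_cst _) (cf y)).
  by move=> y; rewrite normrM normrN ler_wpM2l.
by rewrite -subr_ge0 -e.
Qed.

Lemma stieltjes_ReIm (mu : probability R R) (c e : R) :
  complex.Re (stieltjes mu (Complex c e)) =
    \int[mu]_y ((c - y) / ((c - y) ^+ 2 + e ^+ 2)) /\
  complex.Im (stieltjes mu (Complex c e)) =
    \int[mu]_y (- (e / ((c - y) ^+ 2 + e ^+ 2))).
Proof.
rewrite /stieltjes /=; split; apply: eq_Rintegral => y _ /=.
  by rewrite oppr0 addr0.
by rewrite oppr0 addr0.
Qed.
Lemma cont_den (c e : R) : continuous (fun y : R => (c - y) ^+ 2 + e ^+ 2).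
Proof.
have cb : continuous (fun y : R => c - y).
  by move=> y; exact: (@continuousB _ _ _ (fun=> c) id y (cvg_cst _) cvg_id).
move=> y; exact: (@continuousD _ _ _ (fun y => (c - y) ^+ 2) (fun=> e ^+ 2) y
         (cont_sq _ cb y) (cvg_cst _)).
Qed.

Lemma den_gt0 (c e y : R) : 0 < e -> 0 < (c - y) ^+ 2 + e ^+ 2.
Proof. by move=> he; apply: ltr_wpDl; [exact: sqr_ge0 | exact: exprn_gt0]. Qed.

Lemma cont_f1 (c e : R) : 0 < e -> continuous (fun y : R => (c - y) / ((c - y) ^+ 2 + e ^+ 2)).
Proof.
move=> he y.
have cb : continuous (fun y : R => c - y).
  by move=> z; exact: (@continuousB _ _ _ (fun=> c) id z (cvg_cst _) cvg_id).
apply: (@continuousM _ _ (fun y => c - y) (fun y => ((c - y) ^+ 2 + e ^+ 2)^-1) y (cb y)).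
apply: (@continuousV _ _ (fun y => ((c - y) ^+ 2 + e ^+ 2))).
  by rewrite gt_eqF // den_gt0.
exact: cont_den.
Qed.

Lemma cont_f2 (c e : R) : 0 < e -> continuous (fun y : R => - (e / ((c - y) ^+ 2 + e ^+ 2))).
Proof.
move=> he y; apply: (@continuousN _ _ _ (fun y => (e / ((c - y) ^+ 2 + e ^+ 2)))).
apply: (@continuousM _ _ (fun=> e) (fun y => ((c - y) ^+ 2 + e ^+ 2)^-1) y (cvg_cst _)).
apply: (@continuousV _ _ (fun y => ((c - y) ^+ 2 + e ^+ 2))).
  by rewrite gt_eqF // den_gt0.
exact: cont_den.
Qed.

Lemma bnd_f1 (c e y : R) : 0 < e -> `|(c - y) / ((c - y) ^+ 2 + e ^+ 2)| <= e^-1.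
Proof.
move=> he; have hd := den_gt0 c e y he.
rewrite normrM normfV (ger0_norm (ltW hd)) ler_pdivrMr //.
rewrite ler_pdivlMl //.
have : `|c - y| ^+ 2 = (c - y) ^+ 2 by rewrite real_normK ?num_real.
have := normr_ge0 (c - y); nra.
Qed.

Lemma bnd_f2 (c e y : R) : 0 < e -> `|- (e / ((c - y) ^+ 2 + e ^+ 2))| <= e^-1.
Proof.
move=> he; have hd := den_gt0 c e y he.
rewrite normrN normrM normfV (ger0_norm (ltW hd)) (ger0_norm (ltW he)) ler_pdivrMr //.
rewrite ler_pdivlMl //.
have := sqr_ge0 (c - y); nra.
Qed.

Lemma stieltjes_cs (mu : probability R R) (c e : R) : 0 < e ->
  e * (complex.Re (stieltjes mu (Complex c e)) ^+ 2 +
       complex.Im (stieltjes mu (Complex c e)) ^+ 2)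
  <= - complex.Im (stieltjes mu (Complex c e)).
Proof.
move=> he; have [-> ->] := stieltjes_ReIm mu c e.
set f1 := (fun y => (c - y) / ((c - y) ^+ 2 + e ^+ 2)).
set f2 := (fun y => - (e / ((c - y) ^+ 2 + e ^+ 2))).
have c1 : continuous f1 by exact: cont_f1.
have c2 : continuous f2 by exact: cont_f2.
have b1 : forall y, `|f1 y| <= e^-1 by move=> y; exact: bnd_f1.
have b2 : forall y, `|f2 y| <= e^-1 by move=> y; exact: bnd_f2.
have j1 := jensen mu _ _ c1 b1.
have j2 := jensen mu _ _ c2 b2.
have key : \int[mu]_y (f1 y ^+ 2 + f2 y ^+ 2) = - e^-1 * \int[mu]_y f2 y.
  rewrite -RintegralZl //; last exact: (bnd_int mu _ _ c2 b2).
  apply: eq_Rintegral => y _; rewrite /f1 /f2.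
  have hd := den_gt0 c e y he.
  field; rewrite ?gt_eqF //.
rewrite RintegralD // in key; [| exact: (int_sq mu _ _ c1 b1) | exact: (int_sq mu _ _ c2 b2)].
have : e * (\int[mu]_y f1 y ^+ 2 + \int[mu]_y f2 y ^+ 2) = - \int[mu]_y f2 y.
  by rewrite key mulrA mulrN mulfV ?gt_eqF // mulN1r.
move=> <-; apply: ler_wpM2l; first exact: ltW.
exact: lerD.
Qed.
End S.

Section Cont.
Context (R : realType).
Lemma cD (f g : R -> R) : continuous f -> continuous g -> continuous (fun y => f y + g y).
Proof. by move=> cf cg y; exact: (@continuousD _ _ _ f g y (cf y) (cg y)). Qed.
Lemma cB (f g : R -> R) : continuous f -> continuous g -> continuous (fun y => f y - g y).
Proof. by move=> cf cg y; exact: (@continuousB _ _ _ f g y (cf y) (cg y)). Qed.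
Lemma cM (f g : R -> R) : continuous f -> continuous g -> continuous (fun y => f y * g y).
Proof. by move=> cf cg y; exact: (@continuousM _ _ f g y (cf y) (cg y)). Qed.
Lemma cC (c : R) : continuous (fun _ : R => c).
Proof. by move=> y; exact: cvg_cst. Qed.
Lemma cI : continuous (fun y : R => y).
Proof. by move=> y; exact: cvg_id. Qed.
Lemma cX2 (f : R -> R) : continuous f -> continuous (fun y => f y ^+ 2).
Proof. by move=> cf; rewrite (_ : (fun y => f y ^+ 2) = (fun y => f y * f y)); [apply: cM | apply: funext => y; rewrite expr2]. Qed.

Lemma cvg_right0 (f : R -> R) (l K : R) : 0 <= K ->
  (forall e, 0 < e -> `|f e - l| <= e * K) -> f e @[e --> 0^'+] --> l.
Proof.
move=> K0 hf; apply/cvgrPdist_le => eta heta.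
have hK1 : 0 < K + 1 by lra.
near=> e.
have e0 : 0 < e by near: e; exact: nbhs_right_gt.
have e1 : e < eta / (K + 1) by near: e; apply: nbhs_right_lt; rewrite divr_gt0.
rewrite distrC; apply: le_trans (hf e e0) _.
move: e1; rewrite ltr_pdivlMr // => e1.
have : e * K <= e * (K + 1) by rewrite ler_pM2l //; lra.
lra.
Unshelve. all: by end_near.
Qed.

Lemma cvg_pinf0 (f : R -> R) (T C : R) : 0 <= T -> 0 <= C ->
  (forall t, T < t -> `|f t| <= C / t) -> f t @[t --> +oo] --> 0.
Proof.
move=> T0 C0 hf; apply/cvgrPdist_le => eta heta.
exists (Num.max T (C / eta)); split; first exact: num_real.
move=> t; rewrite gt_max => /andP[h1 h2].
have tp : 0 < t by apply: le_lt_trans h1.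
rewrite sub0r normrN; apply: le_trans (hf t h1) _.
rewrite ler_pdivrMr //; move: h2; rewrite ltr_pdivrMr // => h2.
by rewrite mulrC ltW.
Qed.

Section Lims.
Context {F : set_system R} {FF : Filter F}.
Lemma lD (f g : R -> R) (u v : R) : f @ F --> u -> g @ F --> v -> (fun t => f t + g t) @ F --> u + v.
Proof. exact: cvgD. Qed.
Lemma lB (f g : R -> R) (u v : R) : f @ F --> u -> g @ F --> v -> (fun t => f t - g t) @ F --> u - v.
Proof. exact: cvgB. Qed.
Lemma lM (f g : R -> R) (u v : R) : f @ F --> u -> g @ F --> v -> (fun t => f t * g t) @ F --> u * v.
Proof. exact: cvgM. Qed.
Lemma lN (f : R -> R) (u : R) : f @ F --> u -> (fun t => - f t) @ F --> - u.
Proof. exact: cvgN. Qed.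
Lemma lC (c : R) : (fun _ : R => c) @ F --> c.
Proof. exact: cvg_cst. Qed.
Lemma lX (f : R -> R) (u : R) : f @ F --> u -> (fun t => f t ^+ 2) @ F --> u ^+ 2.
Proof.
move=> h; rewrite (_ : (fun t => f t ^+ 2) = (fun t => f t * f t)); last by apply: funext => t; rewrite expr2.
by rewrite expr2; exact: lM.
Qed.
End Lims.
End Cont.

Import Normc.
Section Alg.
Context (R : realType) (r x a : R) (hr : 0 < r) (hr1 : r <= 1) (hx : 0 < x) (ha : 0 <= a).

Definition Mg := 2 / x + (2 + 4 / x) / r.

Lemma L_Mg (G S d : R) : 0 <= G -> 0 <= S -> 0 <= d -> d <= 1 ->
  x * G * S ^+ 2 <= S ^+ 2 + G * S + d * G -> r * G <= 1 + S -> G <= Mg.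
Proof.
move=> G0 S0 d0 d1 h1 h2.
have hx4 : 0 <= 4 / x by rewrite divr_ge0 // ltW.
have hx2 : 0 <= 2 / x by rewrite divr_ge0 // ltW.
have hM2 : 0 <= (2 + 4 / x) / r by rewrite divr_ge0 ?ltW //; lra.
case: (lerP G (2 / x)) => hG; first by rewrite /Mg; apply: le_trans hG _; rewrite lerDl.
have xG : 2 < x * G by rewrite mulrC -ltr_pdivrMr.
have Gp : 0 < G by apply: le_lt_trans hG; exact: hx2.
have hS : S <= 1 + 4 / x.
  rewrite leNgt; apply/negP => hS.
  have S1 : 1 < S by apply: le_lt_trans hS; rewrite lerDl.
  have xS : 4 < x * S.
    have : 4 / x < S by apply: le_lt_trans hS; rewrite lerDr.
    by rewrite ltr_pdivrMr // mulrC.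
  have S2 : 0 < S ^+ 2 by rewrite exprn_gt0 //; lra.
  have h3 : S ^+ 2 * 2 < x * G * S ^+ 2 by nra.
  have h4 : d * G <= G * S by nra.
  have h5 : x * G * S ^+ 2 < 4 * (G * S) by rewrite expr2 in h1 h3 *; lra.
  have h6 : 0 < G * S * (x * S - 4) by rewrite mulr_gt0 ?subr_gt0 // mulr_gt0 //; lra.
  by move: h5 h6; rewrite expr2; lra.
have : G <= (1 + S) / r by rewrite ler_pdivlMr // mulrC.
move=> h; rewrite /Mg; apply: (le_trans h); rewrite -[X in X <= _]add0r.
apply: lerD => //; rewrite ler_pM2r ?invr_gt0 //; lra.
Qed.

Lemma L_sq (h v D : R) :
  (v ^+ 2 - Num.sqrt (- D) ^+ 2) ^+ 2 <= (h ^+ 2 - v ^+ 2 - D) ^+ 2 + (2 * h * v) ^+ 2.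
Proof.
case: (lerP D 0) => hD.
  rewrite sqr_sqrtr; last by rewrite oppr_ge0.
  rewrite -subr_ge0.
  have -> : (h ^+ 2 - v ^+ 2 - D) ^+ 2 + (2 * h * v) ^+ 2 - (v ^+ 2 - - D) ^+ 2
    = h ^+ 2 * (h ^+ 2 + 2 * v ^+ 2 - 2 * D) by ring.
  apply: mulr_ge0; first exact: sqr_ge0.
  have := sqr_ge0 h; have := sqr_ge0 v; lra.
rewrite (_ : Num.sqrt (- D) = 0); last by apply/eqP; rewrite sqrtr_eq0 oppr_le0 ltW.
rewrite -subr_ge0.
have -> : (h ^+ 2 - v ^+ 2 - D) ^+ 2 + (2 * h * v) ^+ 2 - (v ^+ 2 - 0 ^+ 2) ^+ 2
  = (h ^+ 2 - D) ^+ 2 + 2 * (h ^+ 2 * v ^+ 2) + 2 * D * v ^+ 2 by ring.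
have := sqr_ge0 (h ^+ 2 - D); have := sqr_ge0 v; have := sqr_ge0 h.
have : 0 <= h ^+ 2 * v ^+ 2 by apply: mulr_ge0; exact: sqr_ge0.
have : 0 <= D * v ^+ 2 by apply: mulr_ge0; [exact: ltW | exact: sqr_ge0].
lra.
Qed.

Local Open Scope complex_scope.

Lemma normc_real (k : R) : normc (k%:C) = `|k|.
Proof. by rewrite /normc /= expr0n /= addr0 sqrtr_sqr. Qed.

Lemma normc_sq (u v : R) : normc (Complex u v) ^+ 2 = u ^+ 2 + v ^+ 2.
Proof. by rewrite /normc sqr_sqrtr // addr_ge0 ?sqr_ge0. Qed.


Definition a3 := x * r ^+ 2.
Definition a2 := r - r ^+ 2 - 2 * r * x.
Definition a1 (d : R) := x + 2 * r - 1 - d.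
Definition phi (d sg : R) := sg * (1 + (1 - r + x) * sg + x * sg ^+ 2) - d * (1 + sg).
Definition rho_of (sg : R) := (1 + sg) / r.
Definition bb (sg : R) := a3 * rho_of sg + a2.
Definition cc (d sg : R) := a3 * rho_of sg ^+ 2 + a2 * rho_of sg + a1 d.
Definition mm (sg : R) := - bb sg / (2 * a3).
Definition Dl (d sg : R) := mm sg ^+ 2 - cc d sg / a3.
Definition beta (d sg : R) := Num.sqrt (- Dl d sg).
Definition Kc := 4 * r * Mg * (1 + r * Mg) / a3.

Lemma a3_gt0 : 0 < a3.
Proof. by rewrite /a3 mulr_gt0 // exprn_gt0. Qed.

Lemma im_ident (gu gv w2 d : R) :
  complex.Im ((Complex x w2 * Complex gu gv * ((1 - r%:C * Complex gu gv) * (1 - r%:C * Complex gu gv))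
   - ((1 - r%:C * Complex gu gv) * (1 - r%:C * Complex gu gv)
     + Complex gu gv * (1 - r%:C * Complex gu gv) + d%:C * Complex gu gv))
      * Complex gu (- gv) * (Complex (1 - r * gu) (r * gv) * Complex (1 - r * gu) (r * gv)))
  = w2 * (gu ^+ 2 + gv ^+ 2) * ((1 - r * gu) ^+ 2 + (r * gv) ^+ 2) ^+ 2
    + gv * ((1 - r * gu) ^+ 2 + (r * gv) ^+ 2) ^+ 2
    + (gu ^+ 2 + gv ^+ 2) * (- r * gv) * ((1 - r * gu) ^+ 2 + (r * gv) ^+ 2
           + 2 * (1 - r * gu) * d).
Proof. rewrite /=. ring. Qed.


Lemma Px_rho (d sg : R) : phi d sg = 0 ->
  a3 * rho_of sg ^+ 3 + a2 * rho_of sg ^+ 2 + a1 d * rho_of sg - 1 = 0.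
Proof.
move=> h; have rn : r != 0 by rewrite gt_eqF.
by rewrite -[RHS](mul0r r^-1) -h /phi /a3 /a2 /a1 /rho_of; field.
Qed.

Lemma Px_fact (gu gv d sg : R) : phi d sg = 0 ->
  let g := Complex gu gv in let s := 1 - r%:C * g in
  x%:C * g * (s * s) - (s * s + g * s + d%:C * g)
  = (g - (rho_of sg)%:C) * ((a3 * (gu ^+ 2 - gv ^+ 2) + bb sg * gu + cc d sg)
                            +i* (2 * a3 * gu * gv + bb sg * gv)).
Proof.
move=> /Px_rho h g s.
rewrite /g /s /=; congr Complex.
  apply/eqP; rewrite -subr_eq0; apply/eqP; apply: eq_trans h.
  rewrite /bb /cc /a3 /a2 /a1; ring.
rewrite /bb /cc /a3 /a2 /a1; ring.
Qed.


Lemma normc_sqE (z : R[i]) : normc z ^+ 2 = complex.Re z ^+ 2 + complex.Im z ^+ 2.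
Proof. by case: z => u v; exact: normc_sq. Qed.

Lemma normc_ge0' (z : R[i]) : 0 <= normc z.
Proof. by case: z => u v; rewrite /normc sqrtr_ge0. Qed.

Lemma normc_one : normc (1 : R[i]) = 1.
Proof. by have := normc_real 1; rewrite normr1. Qed.

Lemma le_sq (A B : R) : 0 <= B -> A ^+ 2 <= B ^+ 2 -> A <= B.
Proof. move=> B0 h; rewrite leNgt; apply/negP => hAB; nra. Qed.

Lemma pieceB (gu gv w2 d sg : R) :
  0 < w2 -> 0 <= d -> d <= 1 -> d / 2 <= sg -> sg <= 3 * d / 2 -> phi d sg = 0 ->
  Complex gu gv != 0 -> 1 - r%:C * Complex gu gv != 0 ->
  Complex x w2 * Complex gu gv * ((1 - r%:C * Complex gu gv) * (1 - r%:C * Complex gu gv))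
   = (1 - r%:C * Complex gu gv) * (1 - r%:C * Complex gu gv)
     + Complex gu gv * (1 - r%:C * Complex gu gv) + d%:C * Complex gu gv ->
  w2 * (gu ^+ 2 + gv ^+ 2) <= - gv ->
  gv < 0 /\ `|gv ^+ 2 - beta d sg ^+ 2| <= w2 * Kc.
Proof.
move=> w2p d0 d1 sg1 sg2 hphi gn0 sn0 E CS.
have rn : r != 0 by rewrite gt_eqF.
have Ngp : 0 < gu ^+ 2 + gv ^+ 2.
  rewrite lt_def addr_ge0 ?sqr_ge0 // andbT paddr_eq0 ?sqr_ge0 // !sqrf_eq0.
  by move: gn0; rewrite eq_complex.
have gvn : gv < 0 by have := mulr_gt0 w2p Ngp; lra.
split => //.
have HI := im_ident gu gv w2 d.
rewrite E subrr !mul0r /= in HI.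
set Ng := gu ^+ 2 + gv ^+ 2 in HI Ngp CS.
set al := 1 - r * gu in HI.
set Ns := al ^+ 2 + (r * gv) ^+ 2 in HI.
have T1 : w2 * Ng * Ns ^+ 2 + gv * Ns ^+ 2 <= 0.
  by rewrite -mulrDl mulr_le0_ge0 ?sqr_ge0 //; lra.
have T2 : 0 <= Ng * (- r * gv) * (Ns + 2 * al * d) by lra.
have T3 : 0 <= Ns + 2 * al * d.
  have pos : 0 < Ng * (- r * gv) by apply: mulr_gt0 => //; rewrite mulNr oppr_gt0 pmulr_rlt0.
  by move: T2; rewrite pmulr_rge0.
have Cp : d ^+ 2 <= (al + d) ^+ 2 + (r * gv) ^+ 2.
  by move: T3; rewrite /Ns; nra.
set g := Complex gu gv in E gn0 sn0 *.
set s := 1 - r%:C * g in E sn0 *.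
have sE : s = Complex al (- (r * gv)).
  by apply/eqP; rewrite eq_complex /= /al; apply/andP; split; apply/eqP; ring.
have NS0 : 0 < normc s.
  rewrite lt_def normc_ge0' andbT; apply/negP => /eqP h.
  by move/negP: sn0; apply; apply/eqP; apply: eq0_normc.
have NG0 : 0 <= normc g := normc_ge0' g.
have Nsd : d <= normc (s + d%:C).
  apply: le_sq; first exact: normc_ge0'.
  by rewrite normc_sqE sE /= addr0 sqrrN.
have tri1 : normc (s + d%:C) <= normc (s + sg%:C) + `|d - sg|.
  have -> : s + d%:C = (s + sg%:C) + (d - sg)%:C by rewrite rmorphB /=; ring.
  by apply: le_trans (le_normcD _ _) _; rewrite normc_real.
have tri2 : normc s <= normc (s + d%:C) + d.
  rewrite {1}(_ : s = (s + d%:C) + (- d)%:C); last by rewrite rmorphN /=; ring.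
  apply: le_trans (le_normcD _ _) _.
  by rewrite normc_real normrN ger0_norm.
have hsgd : `|d - sg| <= d / 2.
  rewrite ler_norml; apply/andP; split; lra.
have Nssg : normc s / 4 <= normc (s + sg%:C) by lra.
have Ngr : r * normc (g - (rho_of sg)%:C) = normc (s + sg%:C).
  have -> : s + sg%:C = - (r%:C * (g - (rho_of sg)%:C)).
    rewrite /s /g /rho_of; apply/eqP; rewrite eq_complex /=; apply/andP; split; apply/eqP;
    by field.
  by rewrite normcN normcM normc_real ger0_norm // ltW.
set Q := Complex (a3 * (gu ^+ 2 - gv ^+ 2) + bb sg * gu + cc d sg)
                 (2 * a3 * gu * gv + bb sg * gv).
have PF : x%:C * g * (s * s) - (s * s + g * s + d%:C * g) = (g - (rho_of sg)%:C) * Q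
  := Px_fact gu gv d sg hphi.
have PF2 : (x%:C - Complex x w2) * g * (s * s) = (g - (rho_of sg)%:C) * Q.
  by rewrite -PF -E; ring.
have NxW : normc (x%:C - Complex x w2) = w2.
  by rewrite /normc /= subrr expr0n /= add0r sub0r sqrrN sqrtr_sqr ger0_norm // ltW.
have NPF : w2 * normc g * normc s ^+ 2 = normc (g - (rho_of sg)%:C) * normc Q.
  by rewrite -normcM -PF2 !normcM NxW expr2 mulrA.
have NW : x <= normc (Complex x w2).
  apply: le_sq; first exact: normc_ge0'.
  by rewrite normc_sqE /= lerDl sqr_ge0.
have Nrg : r * normc g <= 1 + normc s.
  have -> : r * normc g = normc (1 - s) by rewrite /s opprB addrC subrK normcM normc_real ger0_norm // ltW.
  apply: le_trans (le_normcD _ _) _; rewrite normcN.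
  by rewrite normc_one.
have Nsg : normc s <= 1 + r * normc g.
  rewrite /s; apply: le_trans (le_normcD _ _) _; rewrite normcN normcM normc_real (ger0_norm (ltW hr)).
  by rewrite normc_one.
have HE : x * normc g * normc s ^+ 2 <= normc s ^+ 2 + normc g * normc s + d * normc g.
  apply: le_trans (_ : normc (Complex x w2 * g * (s * s)) <= _).
    rewrite !normcM -expr2; apply: ler_wpM2r; first exact: sqr_ge0.
    by apply: ler_wpM2r.
  rewrite E; apply: le_trans (le_normcD _ _) _.
  rewrite !normcM normc_real ger0_norm // -expr2 lerD2r.
  by apply: le_trans (le_normcD _ _) _; rewrite !normcM.
have hMg := L_Mg _ _ _ NG0 (ltW NS0) d0 d1 HE Nrg.
have NQ0 : 0 <= normc Q := normc_ge0' Q.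
have h1 : normc s * normc Q <= normc s * (4 * r * w2 * normc g * normc s).
  have -> : normc s * (4 * r * w2 * normc g * normc s)
           = 4 * (r * normc (g - (rho_of sg)%:C)) * normc Q.
    rewrite (_ : 4 * (r * normc (g - (rho_of sg)%:C)) * normc Q
                = 4 * r * (normc (g - (rho_of sg)%:C) * normc Q)); last by ring.
    by rewrite -NPF; ring.
  rewrite Ngr; apply: ler_wpM2r => //; lra.
have NQb : normc Q <= 4 * r * w2 * normc g * normc s by rewrite -(ler_pM2l NS0).
have a3p := a3_gt0.
have a3n : a3 != 0 by rewrite gt_eqF.
set h := gu - mm sg.
have ReQ : complex.Re Q = a3 * (h ^+ 2 - gv ^+ 2 - Dl d sg).
  by rewrite /= /h /Dl /mm; field.
have ImQ : complex.Im Q = a3 * (2 * h * gv).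
  by rewrite /= /h /mm; field.
have LS := L_sq h gv (Dl d sg).
have key : `|gv ^+ 2 - beta d sg ^+ 2| <= normc Q / a3.
  apply: le_sq; first by rewrite divr_ge0 // ltW.
  rewrite real_normK ?num_real // /beta.
  apply: (le_trans LS); rewrite expr_div_n normc_sqE ReQ ImQ ler_pdivlMr ?exprn_gt0 //.
  by rewrite !exprMn; lra.
apply: (le_trans key); rewrite /Kc mulrA ler_pM2r ?invr_gt0 //.
apply: (le_trans NQb).
have hNs : normc s <= 1 + r * Mg.
  apply: (le_trans Nsg); rewrite lerD2l ler_pM2l //.
have : normc g * normc s <= Mg * (1 + r * Mg).
  apply: ler_pM => //; exact: ltW.
have : 0 <= normc g * normc s by apply: mulr_ge0 => //; exact: ltW.
move=> ? ?.
have -> : 4 * r * w2 * normc g * normc s = (4 * r * w2) * (normc g * normc s) by ring.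
have -> : w2 * (4 * r * Mg * (1 + r * Mg)) = (4 * r * w2) * (Mg * (1 + r * Mg)) by ring.
apply: ler_wpM2l => //; apply: mulr_ge0; [apply: mulr_ge0 => //; exact: ltW | exact: ltW].
Qed.


Lemma root_ex (d : R) : 0 <= d -> d <= 1 / 3 -> d * (1 + x) <= 1 ->
  exists sg, [/\ d / 2 <= sg, sg <= 3 * d / 2 & phi d sg = 0].
Proof.
move=> d0 d13 dx.
have hr' : (0:R) < r := hr.
have hr1' : r <= (1:R) := hr1.
have hx' : (0:R) < x := hx.
have cphi : continuous (phi d).
  rewrite /phi; apply: cB; [apply: cM; [exact: cI|] | apply: cM; [exact: cC|]].
    apply: cD; [apply: cD; [exact: cC | apply: cM; [exact: cC | exact: cI]] |].
    by apply: cM; [exact: cC | apply: cX2; exact: cI].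
  by apply: cD; [exact: cC | exact: cI].
have le1 : phi d (d / 2) <= 0.
  have -> : phi d (d / 2) = - d / 2 - d ^+ 2 / 2 + (1 - r) * d ^+ 2 / 4
      + (d * x) * d / 4 + (d * x) * d ^+ 2 / 8 by rewrite /phi; field.
  have h1 : 0 <= d * x by apply: mulr_ge0 => //; exact: ltW.
  have e : d * (1 + x) = d + d * x by ring.
  have h2 : d * x <= 1 by lra.
  have h3 : 0 <= 1 - r by rewrite subr_ge0.
  have h4 : (1 - r) * d ^+ 2 <= d ^+ 2 by rewrite ler_piMl ?sqr_ge0 //; lra.
  have h5 : (d * x) * d <= d by rewrite ler_piMl.
  have h6 : (d * x) * d ^+ 2 <= d ^+ 2 by rewrite ler_piMl ?sqr_ge0.
  have h7 : d ^+ 2 <= d by rewrite expr2 ler_piMl //; lra.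
  have h8 : 0 <= d ^+ 2 := sqr_ge0 d.
  lra.
have le2 : 0 <= phi d (3 * d / 2).
  have -> : phi d (3 * d / 2) = d / 2 - 3 * d ^+ 2 / 2 + (1 - r) * d ^+ 2 * 9 / 4
      + x * d ^+ 2 * 9 / 4 + x * d ^+ 3 * 27 / 8 by rewrite /phi; field.
  have h3 : 0 <= 1 - r by lra.
  have h4 : 0 <= (1 - r) * d ^+ 2 by rewrite mulr_ge0 ?sqr_ge0.
  have h5 : 0 <= x * d ^+ 2 by rewrite mulr_ge0 ?sqr_ge0 ?ltW.
  have h6 : 0 <= x * d ^+ 3 by apply: mulr_ge0; [exact: ltW | exact: exprn_ge0].
  have h7 : 3 * d ^+ 2 <= d by rewrite expr2 mulrA ler_piMl //; lra.
  lra.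
have hab : d / 2 <= 3 * d / 2 by lra.
have hc : {within `[d / 2, 3 * d / 2], continuous (phi d)}.
  by apply: continuous_subspaceT => y; exact: cphi.
have hv : Num.min (phi d (d / 2)) (phi d (3 * d / 2)) <= 0 <= Num.max (phi d (d / 2)) (phi d (3 * d / 2)).
  by apply/andP; split; [rewrite ge_min le1 | rewrite le_max le2 orbT].
have [sg hsg hv0] := IVT hab hc hv.
exists sg; split => //.
  by move: hsg; rewrite in_itv /= => /andP[].
by move: hsg; rewrite in_itv /= => /andP[].
Qed.


Lemma main_t (mu : probability R R) (t e sg : R) (G : R[i]) :
  0 < t -> 0 < e -> a / t <= 1 -> a / t / 2 <= sg -> sg <= 3 * (a / t) / 2 ->
  phi (a / t) sg = 0 ->
  G = stieltjes mu (Complex (t * x) e) ->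
  Complex (t * x) e = G^-1 + t%:C / (1 - (r * t)%:C * G) + a%:C / (1 - (r * t)%:C * G) ^+ 2 ->
  (complex.Im G < 0) /\ (`|(t * complex.Im G) ^+ 2 - beta (a / t) sg ^+ 2| <= e / t * Kc).
Proof.
move=> tp ep d1 sg1 sg2 hphi GS Eq.
have hr' : (0:R) < r := hr.
have tn : t != 0 by rewrite gt_eqF.
have CS0 := @stieltjes_cs R mu (t * x) e ep.
rewrite -GS in CS0.
have Gn0 : G != 0.
  apply/negP => /eqP G0; move: Eq; rewrite G0 mulr0 subr0 invr0 expr1n !divr1 add0r.
  move/(congr1 (@complex.Im R)) => /=; rewrite addr0 => e0.
  by move: ep; rewrite e0 ltxx.
have sn0 : 1 - (r * t)%:C * G != 0.
  apply/negP => /eqP s0.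
  have cG : (r * t)%:C * G = 1 by apply/eqP; rewrite -subr_eq0 -opprB oppr_eq0 s0.
  have GV : G^-1 = (r * t)%:C.
    by rewrite -[G^-1]mul1r -cG mulfK.
  move: Eq; rewrite s0 invr0 expr0n /= invr0 !mulr0 !addr0 GV.
  move/(congr1 (@complex.Im R)) => /= e0.
  by move: ep; rewrite e0 ltxx.
case EG : G => [p q].
rewrite EG in CS0 Gn0 sn0 Eq *; rewrite /= in CS0.
have gE : t%:C * Complex p q = Complex (t * p) (t * q).
  by apply/eqP; rewrite eq_complex /= !mul0r subr0 addr0 !eqxx.
have sE : 1 - (r * t)%:C * Complex p q = 1 - r%:C * Complex (t * p) (t * q).
  by rewrite -gE rmorphM /= mulrA.
have gn0 : Complex (t * p) (t * q) != 0.
  rewrite -gE mulf_neq0 //; apply/negP => /eqP /(congr1 (@complex.Re R)) /= t0.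
  by move: tn; rewrite t0 eqxx.
have qn : q < 0.
  have Np : 0 < p ^+ 2 + q ^+ 2.
    rewrite lt_def addr_ge0 ?sqr_ge0 // andbT paddr_eq0 ?sqr_ge0 // !sqrf_eq0.
    by move: Gn0; rewrite eq_complex.
  by have := mulr_gt0 ep Np; lra.
have hB := @pieceB (t * p) (t * q) (e / t) (a / t) sg.
case: hB.
- by rewrite divr_gt0.
- by rewrite divr_ge0 // ltW.
- exact: d1.
- exact: sg1.
- exact: sg2.
- exact: hphi.
- exact: gn0.
- by rewrite -sE.
- rewrite -sE -gE.
  set s := 1 - (r * t)%:C * Complex p q in Eq sn0 *.
  have E2 : Complex (t * x) e * Complex p q * (s * s) = s * s + t%:C * Complex p q * s + a%:C * Complex p q.
    rewrite Eq; field; rewrite sn0 Gn0 //.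
  have -> : Complex x (e / t) * (t%:C * Complex p q) = Complex (t * x) e * Complex p q.
    by rewrite mulrA; congr (_ * _); apply/eqP; rewrite eq_complex /=; apply/andP; split; apply/eqP; field.
  rewrite E2; congr (_ + _).
  by rewrite mulrA -rmorphM /= mulfVK.
- have -> : e / t * ((t * p) ^+ 2 + (t * q) ^+ 2) = t * (e * (p ^+ 2 + q ^+ 2)) by field.
  by rewrite -mulrN (ler_pM2l tp).
move=> _ hb; split; [exact: qn | exact: hb].
Qed.


Lemma mp_id : mp_density r x = Num.sqrt (- Dl 0 0) / pi.
Proof.
have rn : r != 0 by rewrite gt_eqF.
have xn : x != 0 by rewrite gt_eqF.
have pin : (pi : R) != 0 by rewrite gt_eqF // pi_gt0.
set sq := Num.sqrt r.
have er : r = sq ^+ 2 by rewrite sqr_sqrtr // ltW.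
set P := (x - (1 - sq) ^+ 2) * ((1 + sq) ^+ 2 - x).
have eP : P = 4 * r * x - (1 - r - x) ^+ 2 by rewrite [in RHS]er /P; ring.
have eD : - Dl 0 0 = ((2 * r * x)^-1) ^+ 2 * P.
  rewrite eP /Dl /mm /bb /cc /rho_of /a3 /a2 /a1; field.
  by rewrite rn xn.
have c0 : 0 < (2 * r * x)^-1 by rewrite invr_gt0 mulr_gt0 // mulr_gt0.
have eS : Num.sqrt (- Dl 0 0) = (2 * r * x)^-1 * Num.sqrt P.
  by rewrite eD sqrtrM ?sqr_ge0 // sqrtr_sqr ger0_norm // ltW.
rewrite eS /mp_density -/sq -/P; case: ifP => h.
  move: pin; generalize (pi : R) => p pn.
  by field; rewrite rn xn pn.
have P0 : P <= 0.
  have lohi : (1 - sq) ^+ 2 <= (1 + sq) ^+ 2.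
    have : 0 <= sq by exact: sqrtr_ge0.
    have e4 : (1 + sq) ^+ 2 = (1 - sq) ^+ 2 + 4 * sq by ring.
    by rewrite e4; lra.
  move/negbT: h; rewrite negb_and -!leNgt => /orP[] h.
    by rewrite /P mulr_le0_ge0 // ?subr_le0 ?subr_ge0 // (le_trans h).
  by rewrite /P mulr_ge0_le0 // ?subr_le0 ?subr_ge0 // (le_trans lohi).
by rewrite ler0_sqrtr // mulr0 mul0r.
Qed.


Definition T0 := 3 * a * (1 + x) + 1.

Lemma T0_spec t : T0 < t -> [/\ 0 < t, 0 <= a / t, a / t <= 1 / 3 & a / t * (1 + x) <= 1].
Proof.
move=> ht.
have ha' : (0:R) <= a := ha.
have hx' : (0:R) < x := hx.
have hax : 0 <= a * x by apply: mulr_ge0 => //; exact: ltW.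
have tp : 0 < t by rewrite /T0 in ht; lra.
have e1 : a / t * (1 + x) = (a * (1 + x)) / t by rewrite mulrAC.
have h3 : a * (1 + x) / t <= 1 / 3.
  rewrite ler_pdivrMr // mulrAC ler_pdivlMr // mul1r.
  by move: ht; rewrite /T0 (_ : 3 * a * (1 + x) = a * (1 + x) * 3); [lra | ring].
have h4 : a / t <= a * (1 + x) / t.
  rewrite ler_pM2r ?invr_gt0 // mulrDr mulr1; lra.
split => //; first by rewrite divr_ge0 // ltW.
  by apply: le_trans h4 h3.
by rewrite e1; apply: le_trans h3 _; lra.
Qed.

Lemma sg_ex : exists sgf : R -> R, forall t, T0 < t ->
  [/\ a / t / 2 <= sgf t, sgf t <= 3 * (a / t) / 2 & phi (a / t) (sgf t) = 0].
Proof.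
have H : forall t, exists sg, T0 < t ->
    [/\ a / t / 2 <= sg, sg <= 3 * (a / t) / 2 & phi (a / t) sg = 0].
  move=> t; case: (ltrP T0 t) => ht; last first.
    by exists 0.
  have [tp d0 d13 dx] := T0_spec t ht.
  have [sg [h1 h2 h3]] := root_ex (a / t) d0 d13 dx.
  by exists sg.
have [sgf hsgf] := choice H.
by exists sgf.
Qed.


Lemma main_lemma (G : R -> R[i] -> R[i]) :
  (forall t : R, 0 < t -> MP3_stieltjes r t a (G t)) ->
  exists rho : R -> R,
    (\forall t \near +oo,
       (fun eps : R => - pi^-1 * complex.Im (G t (Complex (t * x) eps)))
         @ 0^'+ --> rho t) /\
    (fun t : R => t * rho t) @ +oo --> mp_density r x.
Proof.
move=> hG.
have pin : (pi : R) != 0 by rewrite gt_eqF // pi_gt0.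
have [sgf hsgf] := sg_ex.
have Kc0 : 0 <= Kc.
  rewrite /Kc; apply: divr_ge0; last exact: ltW a3_gt0.
  have hMg : 0 <= Mg.
    rewrite /Mg; apply: addr_ge0; first by rewrite divr_ge0 // ltW.
    apply: divr_ge0; last exact: ltW.
    by apply: addr_ge0 => //; rewrite divr_ge0 // ltW.
  apply: mulr_ge0; last by apply: addr_ge0 => //; apply: mulr_ge0 => //; exact: ltW.
  by apply: mulr_ge0 => //; apply: mulr_ge0 => //; exact: ltW.
exists (fun t => beta (a / t) (sgf t) / (pi * t)).
split.
- exists T0; split; first exact: num_real.
  move=> t ht.
  have [tp d0 d13 dx] := T0_spec t ht.
  have [sg1 sg2 hphi] := hsgf t ht.
  have [mu hmu] := hG t tp.
  have hv : forall e, 0 < e -> complex.Im (G t (Complex (t * x) e)) < 0 /\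
      `|(t * complex.Im (G t (Complex (t * x) e))) ^+ 2 - beta (a / t) (sgf t) ^+ 2|
        <= e / t * Kc.
    move=> e ep; have [h1 h2] := hmu (Complex (t * x) e) ep.
    apply: (main_t mu t e (sgf t) _ tp ep _ sg1 sg2 hphi h1 h2); lra.
  set bt := beta (a / t) (sgf t).
  have c2 : (fun e => (t * complex.Im (G t (Complex (t * x) e))) ^+ 2) @ 0^'+ --> bt ^+ 2.
    apply: (@cvg_right0 _ _ _ (Kc / t)); first by rewrite divr_ge0 // ltW.
    move=> e ep; have [_ h] := hv e ep.
    suff -> : e * (Kc / t) = e / t * Kc by [].
    by rewrite mulrCA mulrC.
  have c3 := cvg_comp _ _ c2 (@sqrt_continuous R (bt ^+ 2)).
  rewrite sqrtr_sqr ger0_norm /= in c3; last exact: sqrtr_ge0.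
  rewrite (_ : bt / (pi * t) = (pi * t)^-1 * bt); last by rewrite mulrC.
  apply: (@cvg_trans _ ((fun e => (pi * t)^-1 * Num.sqrt ((t * complex.Im (G t (Complex (t * x) e))) ^+ 2)) @ 0^'+)); last first.
    exact: cvgMl_tmp.
  apply: near_eq_cvg; near=> e.
  have e0 : 0 < e by near: e; exact: nbhs_right_gt.
  have [hn _] := hv e e0.
  rewrite /= sqrtr_sqr ltr0_norm; last by rewrite pmulr_rlt0.
  move: pin; generalize (pi : R) => p pn.
  by field; rewrite pn gt_eqF.
- rewrite mp_id.
  have ha' : (0:R) <= a := ha.
  have cd : (fun t => a / t) @ +oo --> 0.
    apply: (@cvg_pinf0 _ _ 0 a) => // t tp.
    by rewrite ger0_norm // divr_ge0 // ltW.
  have T00 : 0 <= T0 by rewrite /T0; have := mulr_ge0 ha' (ltW hx); lra.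
  have cs : (fun t => sgf t) @ +oo --> 0.
    apply: (@cvg_pinf0 _ _ T0 (3 * a / 2)) => //; first lra.
    move=> t ht; have [tp d0 _ _] := T0_spec t ht; have [h1 h2 _] := hsgf t ht.
    rewrite ger0_norm; last lra.
    by apply: (le_trans h2); rewrite le_eqVlt; apply/orP; left; apply/eqP; field; rewrite gt_eqF.
  have cD : (fun t => - Dl (a / t) (sgf t)) @ +oo --> - Dl 0 0.
    rewrite /Dl /mm /bb /cc /rho_of /a1.
    repeat first [exact: cs | exact: cd | apply: lC | apply: lN | apply: lB | apply: lD | apply: lM | apply: lX].
  have cB := cvg_comp _ _ cD (@sqrt_continuous R _).
  rewrite (_ : Num.sqrt (- Dl 0 0) / pi = pi^-1 * Num.sqrt (- Dl 0 0)); last by rewrite mulrC.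
  apply: (@cvg_trans _ ((fun t => pi^-1 * beta (a / t) (sgf t)) @ +oo)); last first.
    exact: cvgMl_tmp.
  apply: near_eq_cvg; exists 0; split; first exact: num_real.
  move=> t tp /=.
  move: pin; generalize (pi : R) => p pn.
  by field; rewrite pn gt_eqF.
Unshelve. all: by end_near.
Qed.

End Alg.

Theorem proposition1p4 (R : realType) (r a : R) (G : R -> R[i] -> R[i]) :
  0 < r -> r <= 1 -> 0 <= a ->
  (forall t : R, 0 < t -> MP3_stieltjes r t a (G t)) ->
  forall x : R, 0 < x ->
  exists rho : R -> R,
    (\forall t \near +oo,
       (fun eps : R => - pi^-1 * complex.Im (G t (Complex (t * x) eps)))
         @ 0^'+ --> rho t) /\
    (fun t : R => t * rho t) @ +oo --> mp_density r x.
Proof.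
move=> hr hr1 ha hG x hx.
exact: (@main_lemma R r x a hr hr1 hx ha G hG).
Qed.
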